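(* Let $k \geq 1$ and let $P \in \mathcal{A}_{2k}$. If $P$ is convex, then $k \leq 2$.
   Context: A polygon $P = \{p_1, \ldots, p_n\}$ in the plane is a cyclic sequence of points (vertices), joined by edges $p_i p_{i+1}$, with indices taken modulo $n$. A polygon is convex if it is a simple closed polygon whose boundary bounds a convex region. Alternating polygons: fix coordinates in the plane. Let $\mathbf{x} = (x_1, \ldots, x_k)$ and $\mathbf{y} = (y_1, \ldots, y_k)$ be vectors in $\mathbb{R}^k$ with $x_i > 0$, $y_i > 0$ for all $i$, and $x_i \neq x_j$, $y_i \neq y_j$ for all $i \neq j$. Let $\sigma = (\sigma_1, \ldots, \sigma_{2k}) \in \{-1, +1\}^{2k}$. The polygon $A(\mathbf{x}, \mathbf{y}, \sigma) = \{p_1, \ldots, p_{2k}\}$ is defined by $p_{2i+1} = (\sigma_{2i+1} x_{i+1}, 0)$ for $i = 0, \ldots, k-1$, and $p_{2i} = (0, \sigma_{2i} y_i)$ for $i = 1, \ldots, k$. The family $\mathcal{A}_{2k}$ consists of all polygons $A(\mathbf{x}, \mathbf{y}, \sigma)$ for all such $\mathbf{x}, \mathbf{y}, \sigma$. *)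

(* Defs.v *)
From HB Require Import structures.
From mathcomp Require Import all_boot all_order all_algebra.
From mathcomp Require Import reals.
Set Implicit Arguments. Unset Strict Implicit. Unset Printing Implicit Defensive.
Import Order.TTheory GRing.Theory Num.Theory.
Local Open Scope ring_scope.

Section Geometry.
Variable R : realType.

Definition point := (R * R)%type.

(* cross product of (b - a) and (c - a): sign gives the side of c w.r.t. line ab *)
Definition orient (a b c : point) : R :=
  (b.1 - a.1) * (c.2 - a.2) - (b.2 - a.2) * (c.1 - a.1).

Definition on_seg (a b z : point) : Prop :=
  exists t : R, 0 <= t <= 1 /\
    z = (a.1 + t * (b.1 - a.1), a.2 + t * (b.2 - a.2)).

Definition simple_polygon n (p : 'I_n -> point) : Prop :=
  injective p /\
  forall i j : 'I_n, i != j -> forall z : point,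
    on_seg (p i) (p (ordS i)) z -> on_seg (p j) (p (ordS j)) z ->
    (j = ordS i /\ z = p j) \/ (i = ordS j /\ z = p i).

(* Convex polygon: a simple closed polygon bounding a convex region, i.e.
   simple and, for every edge, all vertices lie in one closed half-plane
   bounded by the line through that edge. *)
Definition convex_polygon n (p : 'I_n -> point) : Prop :=
  simple_polygon p /\
  forall i : 'I_n,
    (forall j : 'I_n, 0 <= orient (p i) (p (ordS i)) (p j)) \/
    (forall j : 'I_n, orient (p i) (p (ordS i)) (p j) <= 0).

(* Alternating polygon A(x, y, sigma), 0-indexed: vertex m (0 <= m < 2k) is
   p_(m+1) of the paper, i.e. (sigma_m * x_(m/2), 0) for m even and
   (0, sigma_m * y_(m/2)) for m odd (x, y, sigma all 0-indexed). *)
Definition alt_vertex (x y sigma : nat -> R) (m : nat) : point :=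
  if ~~ odd m then (sigma m * x m./2, 0) else (0, sigma m * y m./2).

Definition alt_polygon k (x y sigma : nat -> R) : 'I_(k.*2) -> point :=
  fun m => alt_vertex x y sigma m.

Definition alt_params k (x y sigma : nat -> R) : Prop :=
  (forall i, (i < k)%N -> 0 < x i /\ 0 < y i) /\
  (forall i j, (i < k)%N -> (j < k)%N -> i <> j -> x i <> x j /\ y i <> y j) /\
  (forall m, (m < k.*2)%N -> sigma m = 1 \/ sigma m = -1).

End Geometry.

Arguments alt_polygon {R} k x y sigma _.
Arguments alt_params {R} k x y sigma.

(* Main.v *)
Require Import Defs.
From HB Require Import structures.
From mathcomp Require Import all_boot all_order all_algebra.
From mathcomp Require Import reals.
From mathcomp Require Import ring lra zify.
Import Order.TTheory GRing.Theory Num.Theory.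
Local Open Scope ring_scope.

Lemma orient_even (R : realType) (x y s : nat -> R) (m j : nat) :
  ~~ odd m -> ~~ odd j ->
  orient (alt_vertex x y s m) (alt_vertex x y s m.+1) (alt_vertex x y s j)
  = - (s m.+1 * y m./2) * (s j * x j./2 - s m * x m./2).
Proof.
move=> Hm Hj.
have h2 : uphalf m = m./2 by rewrite uphalf_half (negbTE Hm).
rewrite /orient /alt_vertex /= Hm Hj /= ?(negbTE Hm) /= -/(uphalf m) h2.
ring.
Qed.

Lemma ext_lem (R : realType) (v u a b c : R) : v != 0 ->
  ((0 <= - v * (a - u)) /\ (0 <= - v * (b - u)) /\ (0 <= - v * (c - u))) \/
  ((- v * (a - u) <= 0) /\ (- v * (b - u) <= 0) /\ (- v * (c - u) <= 0)) ->
  (u <= a /\ u <= b /\ u <= c) \/ (a <= u /\ b <= u /\ c <= u).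
Proof.
move=> hv H.
have [hp|hn] : 0 < v \/ v < 0.
  by case: (ltgtP v 0) hv => // _ _; [right|left].
- case: H => [[h1 [h2 h3]]|[h1 [h2 h3]]].
  + right; split; [|split]; nra.
  + left; split; [|split]; nra.
- case: H => [[h1 [h2 h3]]|[h1 [h2 h3]]].
  + left; split; [|split]; nra.
  + right; split; [|split]; nra.
Qed.

Lemma three_ext (R : realType) (a b c : R) :
  (a <= a /\ a <= b /\ a <= c) \/ (a <= a /\ b <= a /\ c <= a) ->
  (b <= a /\ b <= b /\ b <= c) \/ (a <= b /\ b <= b /\ c <= b) ->
  (c <= a /\ c <= b /\ c <= c) \/ (a <= c /\ b <= c /\ c <= c) ->
  a = b \/ b = c \/ a = c.
Proof.
move=> [[? [? ?]]|[? [? ?]]] [[? [? ?]]|[? [? ?]]] [[? [? ?]]|[? [? ?]]];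
  first [left; lra | right; left; lra | right; right; lra].
Qed.

Lemma sgn_ne (R : realType) (s1 s2 x1 x2 : R) :
  (s1 = 1 \/ s1 = -1) -> (s2 = 1 \/ s2 = -1) -> 0 < x1 -> 0 < x2 -> x1 <> x2 ->
  s1 * x1 <> s2 * x2.
Proof.
move=> [->|->] [->|->] h1 h2 hne heq; apply: hne; lra.
Qed.

Theorem lemma1 (R : realType) (k : nat) (x y sigma : nat -> R) :
  (1 <= k)%N -> alt_params k x y sigma ->
  convex_polygon (alt_polygon k x y sigma) -> (k <= 2)%N.
Proof.
move=> _ [hpos [hdist hsig]] [_ hconv].
rewrite leqNgt; apply/negP => hk.
have l0 : (0 < k.*2)%N by lia.
have l2 : (2 < k.*2)%N by lia.
have l4 : (4 < k.*2)%N by lia.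
pose i0 := Ordinal l0. pose i2 := Ordinal l2. pose i4 := Ordinal l4.
have step : forall i : 'I_(k.*2), ~~ odd i -> (i.+1 < k.*2)%N ->
  let u := sigma i * x i./2 in
  (u <= sigma 0%N * x 0%N /\ u <= sigma 2%N * x 1%N /\ u <= sigma 4%N * x 2%N) \/
  (sigma 0%N * x 0%N <= u /\ sigma 2%N * x 1%N <= u /\ sigma 4%N * x 2%N <= u).
  move=> i hi hlt u.
  have hS : val (ordS i) = i.+1 by rewrite /= modn_small.
  have E : forall j : 'I_(k.*2), ~~ odd j ->
    orient (alt_polygon k x y sigma i) (alt_polygon k x y sigma (ordS i))
      (alt_polygon k x y sigma j) =
    - (sigma i.+1 * y i./2) * (sigma j * x j./2 - u).
    by move=> j hj; rewrite /alt_polygon hS orient_even.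
  apply: (@ext_lem R (sigma i.+1 * y i./2)).
    have hy : 0 < y i./2 by case: (hpos i./2) => //; lia.
    by case: (hsig i.+1 hlt) => ->; rewrite ?mulN1r ?mul1r ?oppr_eq0 gt_eqF.
  case: (hconv i) => H; [left|right];
    have := H i0; have := H i2; have := H i4;
    rewrite !E //= => h4 h2 h0; split; try split; assumption.
have m1 : (1 < k.*2)%N by lia.
have m3 : (3 < k.*2)%N by lia.
have m5 : (5 < k.*2)%N by lia.
have s0 := step i0 isT m1.
have s2 := step i2 isT m3.
have s4 := step i4 isT m5.
simpl in s0, s2, s4.
have k0 : (0 < k)%N by lia.
have k1 : (1 < k)%N by lia.
have x0 := hpos 0%N k0. have x1 := hpos 1%N k1.
have x2 := hpos 2%N hk.
have [d01 [d12 d02]] : (x 0%N <> x 1%N) /\ (x 1%N <> x 2%N) /\ (x 0%N <> x 2%N).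
  by split; [|split]; apply: (hdist _ _ _ _ _).1.
have g0 := hsig 0%N l0. have g2 := hsig 2%N l2. have g4 := hsig 4%N l4.
case: (@three_ext R _ _ _ s0 s2 s4) => [|[]].
- by apply: sgn_ne; by [case: x0|case: x1|case: x2|auto].
- by apply: sgn_ne; by [case: x0|case: x1|case: x2|auto].
- by apply: sgn_ne; by [case: x0|case: x1|case: x2|auto].
Qed.
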